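(* Let $m>1$ be odd, let $\varphi:\mathbb{Z}_{2m}\to\{\pm1\}$ be a binary sequence, let $\phi$ be the binary $(2,m)$-array obtained from $\varphi$ by the rule below, and let $f(k)=\frac{1-\mathrm{i}}{2}(\phi(0,k)+\mathrm{i}\phi(1,k))$ for $k\in\mathbb{Z}_m$. Then $f$ is an OQS if and only if $\varphi$ is a GOBS of length $2m$. The rule ($a\in\{0,1\}$, $k$ an integer in $\{0,\ldots,m-1\}$, arguments of $\varphi$ modulo $2m$): if $m\equiv1\pmod 4$, $\phi(a,k)$ equals $\varphi(k+am)$, $(-1)^{1-a}\varphi(k+(1-a)m)$, $-\varphi(k+am)$, $(-1)^a\varphi(k+(1-a)m)$ according as $k\equiv 0,1,2,3\pmod 4$; if $m\equiv 3\pmod 4$, $\phi(a,k)$ equals $(-1)^a\varphi(k+am)$, $\varphi(k+(1-a)m)$, $(-1)^{1-a}\varphi(k+am)$, $-\varphi(k+(1-a)m)$ according as $k\equiv 0,1,2,3\pmod 4$.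
   Context: $\mathrm{i}=\sqrt{-1}$. For a finite abelian group $A$ and $\psi:A\to\mathbb{C}$, $R_\psi(x)=\sum_{b\in A}\psi(b)\overline{\psi(x+b)}$. A quaternary sequence $f:\mathbb{Z}_m\to\{\pm1,\pm\mathrm{i}\}$, $m$ odd, is an OQS if $|R_f(w)|=1$ for all $1\le w\le m-1$. For a binary sequence $\varphi:\mathbb{Z}_{2m}\to\{\pm1\}$, its expansion is $\varphi':\mathbb{Z}_{4m}\to\{\pm1\}$ with $\varphi'(x)=\varphi(x\bmod 2m)$ for $x\in\{0,\ldots,2m-1\}$ and $\varphi'(x)=-\varphi(x\bmod 2m)$ for $x\in\{2m,\ldots,4m-1\}$. $\varphi$ is a GOBS if $R_{\varphi'}(x)\in\{0,4,-4\}$ for all $x\in\mathbb{Z}_{4m}\setminus\{0,2m\}$ and exactly $2m$ elements $x\in\mathbb{Z}_{4m}$ satisfy $R_{\varphi'}(x)=0$. *)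

(* Defs.v *)
From HB Require Import structures.
From mathcomp Require Import all_boot all_order all_algebra all_field.
Set Implicit Arguments. Unset Strict Implicit. Unset Printing Implicit Defensive.
Import Order.TTheory GRing.Theory Num.Theory.
Local Open Scope ring_scope.

(* A sequence on Z_n is a function psi : nat -> algC read at indices 0..n-1;
   arguments are reduced modulo n. *)

Definition Rcorr (n : nat) (psi : nat -> algC) (x : nat) : algC :=
  \sum_(b < n) psi b * (psi ((x + b) %% n)%N)^*.

Definition quaternary (m : nat) (f : nat -> algC) : Prop :=
  forall k, (k < m)%N -> f k \in [:: 1; -1; 'i; - 'i].

Definition OQS (m : nat) (f : nat -> algC) : Prop :=
  quaternary m f /\ forall w, (0 < w < m)%N -> `|Rcorr m f w| = 1.

Definition expansion (m : nat) (varphi : nat -> algC) (x : nat) : algC :=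
  if (x %% (4 * m) < 2 * m)%N then varphi (x %% (2 * m))%N
  else - varphi (x %% (2 * m))%N.

Definition GOBS (m : nat) (varphi : nat -> algC) : Prop :=
  (forall x, (x < 4 * m)%N -> x != 0%N -> x != (2 * m)%N ->
      Rcorr (4 * m) (expansion m varphi) x \in [:: 0; 4; -4])
  /\ #|[set x : 'I_(4 * m) | Rcorr (4 * m) (expansion m varphi) x == 0]| = (2 * m)%N.

Definition arr (m : nat) (varphi : nat -> algC) (a k : nat) : algC :=
  let s := varphi ((k + a * m) %% (2 * m))%N in
  let t := varphi ((k + (1 - a) * m) %% (2 * m))%N in
  if (m %% 4 == 1)%N then
    match (k %% 4)%N with
    | 0 => s | 1 => (-1) ^+ (1 - a) * t | 2 => - s | _ => (-1) ^+ a * t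
    end
  else
    match (k %% 4)%N with
    | 0 => (-1) ^+ a * s | 1 => t | 2 => (-1) ^+ (1 - a) * s | _ => - t
    end.

Definition fseq (m : nat) (varphi : nat -> algC) (k : nat) : algC :=
  (1 - 'i) / 2 * (arr m varphi 0 k + 'i * arr m varphi 1 k).

(* Main.v *)
Set Warnings "-all".
Require Import Defs.
From HB Require Import structures.
From mathcomp Require Import all_boot all_order all_algebra all_field.
From mathcomp Require Import zify ring lra.
Import Order.TTheory GRing.Theory Num.Theory.
Local Open Scope ring_scope.
Set Implicit Arguments. Unset Strict Implicit.

Ltac ev := repeat match goal with
 | |- context [ (?a %% 4)%N ] => progress (let v := eval vm_compute in (a %% 4)%N in change (a %% 4)%N with v)
 | |- context [ (?a %% 2)%N ] => progress (let v := eval vm_compute in (a %% 2)%N in change (a %% 2)%N with v)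
 | |- context [ (1 - ?a)%N ] => progress (let v := eval vm_compute in (1 - a)%N in change (1 - a)%N with v)
 end.

Definition eps (u : nat) : algC := if (u < 2)%N then 1 else -1.

Lemma e_crt m (vp : nat -> algC) y : odd m ->
  expansion m vp y = eps (y %% 4) * arr m vp ((y %% 4) %% 2) (y %% m).
Proof.
move=> om; have m0 : (0 < m)%N by case: m om.
have d2 : (2 * m %| 4 * m)%N by apply: dvdn_mul.
have d4 : (4 %| 4 * m)%N by rewrite dvdn_mulr.
have dm : (m %| 4 * m)%N by rewrite dvdn_mull.
rewrite /expansion -(modn_dvdm y d2) -(modn_dvdm y d4) -(modn_dvdm y dm).
have : (y %% (4 * m) < 4 * m)%N by rewrite ltn_mod muln_gt0 m0.
move: (y %% (4 * m))%N => r hr.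
rewrite (divn_eq r m).
have : (r %/ m < 4)%N by rewrite ltn_divLR.
have : (r %% m < m)%N by rewrite ltn_mod.
move: (r %/ m)%N (r %% m)%N => q k hk hq.
rewrite modnMDl.
have Em : (m %% 4 = 1 \/ m %% 4 = 3)%N.
  have : (m %% 4 < 4)%N by rewrite ltn_mod.
  have : odd (m %% 4) by rewrite odd_mod.
  move: (m %% 4)%N => M. by do 4?[case: M => [|M] //]; auto.
have e4 : ((q * m + k) %% 4 = (q * (m %% 4) + k %% 4) %% 4)%N.
  by rewrite -[in RHS]modnDml modnMmr modnDml modnDmr.
rewrite e4 /arr.
have K4 : (k %% 4 < 4)%N by rewrite ltn_mod.
have ek1 : (k %% (2 * m) = k)%N by rewrite modn_small // (leq_trans hk) // leq_pmull.
have ek2 : ((k + m) %% (2 * m) = k + m)%N by rewrite modn_small // mul2n -addnn ltn_add2r.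
rewrite (modn_small hk).
move: (k %% 4)%N K4 => K K4.
case: q hq {e4} => [|[|[|[|q]]]] // _.
- rewrite mul0n add0n ek1 (leq_trans hk) ?leq_pmull //.
  case: Em => -> /=; do 4?[case: K K4 => [|K] K4] => //=; ev; rewrite ?mul0n ?mul1n ?addn0 ?ek1 ?ek2 /eps /= ?expr0 ?expr1 ?mul1r ?mulN1r ?mulNr ?opprK ?mul1r //.
- have ltm : (k + m < 2 * m)%N by rewrite mul2n -addnn ltn_add2r.
  rewrite mul1n (addnC m k) ek2 ltm.
  case: Em => -> /=; do 4?[case: K K4 => [|K] K4] => //=; ev; rewrite ?mul0n ?mul1n ?addn0 ?ek1 ?ek2 /eps /= ?expr0 ?expr1 ?mul1r ?mulN1r ?mulNr ?opprK ?mul1r //.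
- rewrite modnDl ek1 ltnNge leq_addr /=.
  case: Em => -> /=; do 4?[case: K K4 => [|K] K4] => //=; ev; rewrite ?mul0n ?mul1n ?addn0 ?ek1 ?ek2 /eps /= ?expr0 ?expr1 ?mul1r ?mulN1r ?mulNr ?opprK ?mul1r //.
- rewrite mulSn addnAC modnDr (addnC m k) ek2 ltnNge leq_addl /=.
  case: Em => -> /=; do 4?[case: K K4 => [|K] K4] => //=; ev; rewrite ?mul0n ?mul1n ?addn0 ?ek1 ?ek2 /eps /= ?expr0 ?expr1 ?mul1r ?mulN1r ?mulNr ?opprK ?mul1r //.
Qed.

Definition crt m (u k : nat) : nat := (chinese 4 m u k %% (4 * m))%N.

Lemma crt_props m u k : odd m -> (u < 4)%N -> (k < m)%N ->
  [/\ (crt m u k < 4 * m)%N, (crt m u k %% 4 = u)%N & (crt m u k %% m = k)%N].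
Proof.
move=> om hu hk; have m0 : (0 < m)%N by case: m om hk.
have co : coprime 4 m by rewrite (_ : 4 = 2 ^ 2)%N // coprimeXl // coprime2n.
split; first by rewrite /crt ltn_mod muln_gt0 m0.
- by rewrite /crt modn_dvdm ?dvdn_mulr // chinese_modl // modn_small.
- by rewrite /crt modn_dvdm ?dvdn_mull // chinese_modr // modn_small.
Qed.

Lemma big_crt m (R : Type) (idx : R) (op : Monoid.com_law idx) (F : nat -> R) : odd m ->
  \big[op/idx]_(b < 4 * m) F b = \big[op/idx]_(u < 4) \big[op/idx]_(k < m) F (crt m u k).
Proof.
move=> om; have m0 : (0 < m)%N by case: m om.
have hlt : forall p : 'I_4 * 'I_m, (crt m p.1 p.2 < 4 * m)%N.
  by move=> [u k]; case: (crt_props om (ltn_ord u) (ltn_ord k)).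
pose h (p : 'I_4 * 'I_m) : 'I_(4 * m) := Ordinal (hlt p).
have hinj : injective h.
  move=> [u1 k1] [u2 k2] /(congr1 val) /= e.
  case: (crt_props om (ltn_ord u1) (ltn_ord k1)) => _ a1 b1.
  case: (crt_props om (ltn_ord u2) (ltn_ord k2)) => _ a2 b2.
  congr pair; apply: val_inj => /=.
  - by rewrite -a1 -a2 e.
  - by rewrite -b1 -b2 e.
have hbij : bijective h by apply: inj_card_bij => //; rewrite card_prod !card_ord.
rewrite pair_big /= (reindex h) /=; last by apply: onW_bij.
by [].
Qed.

Lemma sum_crt m (F : nat -> algC) : odd m ->
  \sum_(b < 4 * m) F b = \sum_(u < 4) \sum_(k < m) F (crt m u k).
Proof. exact: big_crt. Qed.

Definition pm (z : algC) := z = 1 \/ z = -1.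
Definition sgZ (z : algC) : int := if z == 1 then 1 else -1.

Lemma pm_int z : pm z -> z = (sgZ z)%:~R /\ (sgZ z = 1 \/ sgZ z = -1).
Proof.
rewrite /sgZ; case=> ->; first by rewrite eqxx; split; [|left].
have -> : ((-1 : algC) == 1) = false.
  by apply/negbTE; rewrite eq_sym -addr_eq0 (_ : 1 + 1 = 2%:R) // pnatr_eq0.
by split; [rewrite rmorphN1 | right].
Qed.

Lemma pmN z : pm z -> pm (- z).
Proof. by case=> ->; [right | left; rewrite opprK]. Qed.

Lemma pmS n z : pm z -> pm ((-1) ^+ n * z).
Proof.
move=> h; elim: n => [|n IH]; first by rewrite expr0 mul1r.
by rewrite exprS -mulrA mulN1r; apply: pmN.
Qed.

Lemma arr_pm m vp a k : (0 < m)%N -> (forall x, (x < 2 * m)%N -> pm (vp x)) ->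
  pm (arr m vp a k).
Proof.
move=> m0 hv.
have h : forall i, pm (vp (i %% (2 * m))%N) by move=> i; apply: hv; rewrite ltn_mod muln_gt0 m0.
rewrite /arr; case: ifP => _; case: (k %% 4)%N => [|[|[|?]]];
  by apply: pmS || apply: pmN || apply: h.
Qed.

Lemma key_int (a0 a1 c0 c1 : int) :
  (a0 = 1 \/ a0 = -1) -> (a1 = 1 \/ a1 = -1) -> (c0 = 1 \/ c0 = -1) -> (c1 = 1 \/ c1 = -1) ->
  let x := if a0 * c0 == a1 * c1 then a0 * c0 else 0 in
  let y := if a0 * c0 == a1 * c1 then 0 else a0 * c1 in
  [/\ a0 * c0 + a1 * c1 = 2 * x, a0 * c1 - a1 * c0 = 2 * y & (x + y = 1 \/ x + y = -1)].
Proof.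
by case=> ->; case=> ->; case=> ->; case=> -> /=; split => //; auto.
Qed.

Lemma fprod (a0 a1 c0 c1 : algC) : c0^* = c0 -> c1^* = c1 ->
 ((1 - 'i)/2 * (a0 + 'i * a1)) * ((1 - 'i)/2 * (c0 + 'i * c1))^* =
   ((a0*c0 + a1*c1) - 'i * (a0*c1 - a1*c0)) / 2.
Proof.
move=> h0 h1.
have c2 : (2 : algC)^* = 2 by rewrite (rmorph_nat _ 2).
have -> : ((1 - 'i)/2 * (c0 + 'i * c1))^* = (1 + 'i)/2 * (c0 - 'i * c1).
  rewrite rmorphM rmorphM fmorphV rmorph_nat rmorphB rmorph1 rmorphD rmorphM.
  rewrite -[X in X = _]/((1 - 'i^*)/2 * (c0^* + 'i^* * c1^*)) conjCi h0 h1 opprK.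
  by rewrite mulNr.
have h2 : (2 : algC) != 0 by rewrite pnatr_eq0.
have -> : (1 - 'i) / 2 * (a0 + 'i * a1) * ((1 + 'i) / 2 * (c0 - 'i * c1)) =
   (1 - 'i^+2) / 4 * (a0*c0 - 'i * a0*c1 + 'i * a1*c0 - 'i^+2 * a1*c1) :> algC.
  by field.
rewrite sqrCi. by field.
Qed.

Definition al m vp a k : int := sgZ (arr m vp a k).
Definition xk m vp w k : int :=
  if al m vp 0 k * al m vp 0 ((w + k) %% m) == al m vp 1 k * al m vp 1 ((w + k) %% m)
  then al m vp 0 k * al m vp 0 ((w + k) %% m) else 0.
Definition yk m vp w k : int :=
  if al m vp 0 k * al m vp 0 ((w + k) %% m) == al m vp 1 k * al m vp 1 ((w + k) %% m)
  then 0 else al m vp 0 k * al m vp 1 ((w + k) %% m).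
Definition Xs m vp w : int := \sum_(k < m) xk m vp w k.
Definition Ys m vp w : int := \sum_(k < m) yk m vp w k.

Lemma intr_sum n (z : nat -> int) : ((\sum_(k < n) z k)%:~R : algC) = \sum_(k < n) (z k)%:~R.
Proof.
elim: n => [|n IH]; first by rewrite !big_ord0.
by rewrite !big_ord_recr /= intrD IH.
Qed.

Lemma al_prop m vp a k : (0 < m)%N -> (forall x, (x < 2 * m)%N -> pm (vp x)) ->
  arr m vp a k = (al m vp a k)%:~R /\ (al m vp a k = 1 \/ al m vp a k = -1).
Proof. by move=> m0 hv; apply: pm_int; apply: arr_pm. Qed.

Lemma key_k m vp w k : (0 < m)%N -> (forall x, (x < 2 * m)%N -> pm (vp x)) ->
  [/\ al m vp 0 k * al m vp 0 ((w + k) %% m) + al m vp 1 k * al m vp 1 ((w + k) %% m) = 2 * xk m vp w k,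
      al m vp 0 k * al m vp 1 ((w + k) %% m) - al m vp 1 k * al m vp 0 ((w + k) %% m) = 2 * yk m vp w k
    & (xk m vp w k + yk m vp w k = 1 \/ xk m vp w k + yk m vp w k = -1)].
Proof.
move=> m0 hv; rewrite /xk /yk.
apply: key_int.
- exact: (@al_prop m vp 0 k m0 hv).2.
- exact: (@al_prop m vp 1 k m0 hv).2.
- exact: (@al_prop m vp 0 _ m0 hv).2.
- exact: (@al_prop m vp 1 _ m0 hv).2.
Qed.

Lemma Rf_eq m vp w : (0 < m)%N -> (forall x, (x < 2 * m)%N -> pm (vp x)) ->
  Rcorr m (fseq m vp) w = (Xs m vp w)%:~R - 'i * (Ys m vp w)%:~R.
Proof.
move=> m0 hv.
rewrite /Rcorr /Xs /Ys !intr_sum mulr_sumr -sumrB; apply: eq_bigr => k _.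
rewrite /fseq.
rewrite (@al_prop m vp 0 k m0 hv).1 (@al_prop m vp 1 k m0 hv).1.
rewrite (@al_prop m vp 0 ((w + k) %% m) m0 hv).1 (@al_prop m vp 1 ((w + k) %% m) m0 hv).1.
rewrite fprod ?rmorph_int //.
case: (@key_k m vp w k m0 hv) => e1 e2 _.
rewrite -!intrM -intrD -intrB e1 e2 !intrM.
by field.
Qed.

Definition Zs m vp (s : nat) w : int :=
  match s with 0 => Xs m vp w | 1 => Ys m vp w | 2 => - Xs m vp w | _ => - Ys m vp w end.

Lemma conj_e m vp y : (0 < m)%N -> (forall x, (x < 2 * m)%N -> pm (vp x)) ->
  (expansion m vp y)^* = expansion m vp y.
Proof.
move=> m0 hv.
have : pm (expansion m vp y).
  rewrite /expansion; case: ifP => _; [|apply: pmN]; apply: hv; by rewrite ltn_mod muln_gt0 m0.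
by case=> ->; rewrite ?rmorph1 ?rmorphN1.
Qed.

Lemma e_at m vp x u k : odd m -> (u < 4)%N -> (k < m)%N ->
  expansion m vp ((x + crt m u k) %% (4 * m)) =
  eps ((x %% 4 + u) %% 4) * arr m vp (((x %% 4 + u) %% 4) %% 2) ((x %% m + k) %% m).
Proof.
move=> om hu hk; case: (crt_props om hu hk) => _ e4 em.
have h4 : ((x + crt m u k) %% (4 * m) %% 4 = (x %% 4 + u) %% 4)%N.
  by rewrite modn_dvdm ?dvdn_mulr // -modnDm e4.
have hm : ((x + crt m u k) %% (4 * m) %% m = (x %% m + k) %% m)%N.
  by rewrite modn_dvdm ?dvdn_mull // -modnDm em.
by rewrite e_crt // h4 hm.
Qed.

Lemma e_at0 m vp u k : odd m -> (u < 4)%N -> (k < m)%N ->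
  expansion m vp (crt m u k) = eps u * arr m vp (u %% 2) k.
Proof.
move=> om hu hk; case: (crt_props om hu hk) => lt e4 em.
by rewrite e_crt // e4 em.
Qed.

Lemma E1 m vp w k : (0 < m)%N -> (forall x, (x < 2 * m)%N -> pm (vp x)) ->
  arr m vp 0 k * arr m vp 0 ((w + k) %% m) + arr m vp 1 k * arr m vp 1 ((w + k) %% m)
    = 2 * (xk m vp w k)%:~R
  /\ arr m vp 0 k * arr m vp 1 ((w + k) %% m) - arr m vp 1 k * arr m vp 0 ((w + k) %% m)
    = 2 * (yk m vp w k)%:~R.
Proof.
move=> m0 hv.
rewrite (@al_prop m vp 0 k m0 hv).1 (@al_prop m vp 1 k m0 hv).1.
rewrite (@al_prop m vp 0 ((w + k) %% m) m0 hv).1 (@al_prop m vp 1 ((w + k) %% m) m0 hv).1.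
case: (@key_k m vp w k m0 hv) => e1 e2 _.
by rewrite -!intrM -intrD -intrB e1 e2 !intrM.
Qed.

Lemma Rexp m vp x : odd m -> (forall x, (x < 2 * m)%N -> pm (vp x)) ->
  Rcorr (4 * m) (expansion m vp) x = 4 * (Zs m vp (x %% 4) (x %% m))%:~R.
Proof.
move=> om hv; have m0 : (0 < m)%N by case: m om hv.
rewrite /Rcorr.
under eq_bigr do rewrite conj_e //.
rewrite (sum_crt (fun b => expansion m vp b * expansion m vp ((x + b) %% (4 * m))) om).
under eq_bigr do under eq_bigr do rewrite e_at0 // e_at //.
rewrite exchange_big /=.
have : (x %% 4 < 4)%N by rewrite ltn_mod.
move: (x %% 4)%N (x %% m)%N => s w hs.
rewrite /Zs /Xs /Ys.
case: s hs => [|[|[|[|s]]]] // _; rewrite -?sumrN.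
- rewrite (intr_sum m (xk m vp w)).
  rewrite mulr_sumr; apply: eq_bigr => k _; rewrite !big_ord_recl big_ord0 /=; ev; rewrite /eps /=.
  transitivity (2 * (arr m vp 0 k * arr m vp 0 ((w + k) %% m) + arr m vp 1 k * arr m vp 1 ((w + k) %% m))); first by ring.
  by rewrite (@E1 m vp w k m0 hv).1; ring.
- rewrite (intr_sum m (yk m vp w)).
  rewrite mulr_sumr; apply: eq_bigr => k _; rewrite !big_ord_recl big_ord0 /=; ev; rewrite /eps /=.
  transitivity (2 * (arr m vp 0 k * arr m vp 1 ((w + k) %% m) - arr m vp 1 k * arr m vp 0 ((w + k) %% m))); first by ring.
  by rewrite (@E1 m vp w k m0 hv).2; ring.
- rewrite (intr_sum m (fun k => - xk m vp w k)).
  rewrite mulr_sumr; apply: eq_bigr => k _; rewrite !big_ord_recl big_ord0 /=; ev; rewrite /eps /=.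
  transitivity (- 2 * (arr m vp 0 k * arr m vp 0 ((w + k) %% m) + arr m vp 1 k * arr m vp 1 ((w + k) %% m))); first by ring.
  by rewrite (@E1 m vp w k m0 hv).1 rmorphN; ring.
- rewrite (intr_sum m (fun k => - yk m vp w k)).
  rewrite mulr_sumr; apply: eq_bigr => k _; rewrite !big_ord_recl big_ord0 /=; ev; rewrite /eps /=.
  transitivity (- 2 * (arr m vp 0 k * arr m vp 1 ((w + k) %% m) - arr m vp 1 k * arr m vp 0 ((w + k) %% m))); first by ring.
  by rewrite (@E1 m vp w k m0 hv).2 rmorphN; ring.
Qed.

Lemma sum_pm n (z : nat -> int) : (forall k, (k < n)%N -> z k = 1 \/ z k = -1) ->
  exists c : int, \sum_(k < n) z k = n%:Z - 2 * c.
Proof.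
elim: n => [|n IH] hz; first by exists 0; rewrite big_ord0.
case: IH => [k hk|c hc]; first by apply: hz; apply: ltnW.
rewrite big_ord_recr /= hc.
by case: (hz n (ltnSn n)) => ->; [exists c | exists (c + 1)]; lia.
Qed.

Lemma par m vp w : (0 < m)%N -> (forall x, (x < 2 * m)%N -> pm (vp x)) ->
  exists c : int, Xs m vp w + Ys m vp w = m%:Z - 2 * c.
Proof.
move=> m0 hv; rewrite /Xs /Ys -big_split /=.
apply: (@sum_pm m (fun k => xk m vp w k + yk m vp w k)) => k _.
by case: (@key_k m vp w k m0 hv).
Qed.

Lemma XY0 m vp : (0 < m)%N -> (forall x, (x < 2 * m)%N -> pm (vp x)) ->
  Xs m vp 0 = m%:Z /\ Ys m vp 0 = 0.
Proof.
move=> m0 hv.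
have sq : forall a k, al m vp a k * al m vp a k = 1.
  by move=> a k; case: (@al_prop m vp a k m0 hv) => _ [] ->.
have hx : forall k : 'I_m, xk m vp 0 k = 1.
  by move=> k; rewrite /xk add0n (modn_small (ltn_ord k)) !sq eqxx.
have hy : forall k : 'I_m, yk m vp 0 k = 0.
  by move=> k; rewrite /yk add0n (modn_small (ltn_ord k)) !sq eqxx.
rewrite /Xs /Ys (eq_bigr _ (fun k _ => hx k)) (eq_bigr _ (fun k _ => hy k)).
split; last by rewrite big1.
elim: (m) => [|n IH]; first by rewrite big_ord0.
by rewrite big_ord_recr /= IH; lia.
Qed.

Lemma norm_int (X Y : int) :
  `|(X%:~R - 'i * Y%:~R : algC)| = 1 <-> X * X + Y * Y = 1.
Proof.
have e : `|(X%:~R - 'i * Y%:~R : algC)| ^+ 2 = (X * X + Y * Y)%:~R.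
  rewrite -mulrN -intrN normC2_rect ?realz // intrD !intrM intrN.
  by rewrite !expr2 mulrNN.
split => h.
- have : `|(X%:~R - 'i * Y%:~R : algC)| ^+ 2 = 1 by rewrite h expr1n.
  rewrite e => h1; apply/eqP; rewrite -(eqr_int algC); apply/eqP; exact: h1.
- apply/eqP; rewrite -sqrp_eq1 ?normr_ge0 // e h.
  by [].
Qed.

Lemma mem4 (z : int) :
  (4 * z%:~R : algC) \in [:: 0; 4; -4] <-> (z = 0 \/ z = 1 \/ z = -1).
Proof.
have e : (4 * z%:~R : algC) = (4 * z)%:~R by rewrite intrM.
have f4 : (4 : algC) = (4 : int)%:~R by [].
rewrite e !inE intr_eq0 f4 -intrN !eqr_int.
split.
- by move=> /orP[/eqP|/orP[/eqP|/eqP]] h; lia.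
- by case=> [->|[->|->]].
Qed.

Lemma mul4_eq0 (z : int) : (4 * z%:~R == 0 :> algC) = (z == 0).
Proof. by rewrite mulf_eq0 pnatr_eq0 /= intr_eq0. Qed.

Lemma quat (a b : algC) : pm a -> pm b -> (1 - 'i) / 2 * (a + 'i * b) \in [:: 1; -1; 'i; - 'i].
Proof.
have h2 : (2 : algC) != 0 by rewrite pnatr_eq0.
case=> -> [] ->.
- have -> : (1 - 'i) / 2 * (1 + 'i * 1) = (1 - 'i ^+ 2) / 2 :> algC by field.
  by rewrite sqrCi opprK (_ : (1 + 1) / 2 = 1 :> algC) ?inE ?eqxx //; field.
- have -> : (1 - 'i) / 2 * (1 + 'i * -1) = (1 + 'i ^+ 2) / 2 - 'i :> algC by field.
  by rewrite sqrCi subrr mul0r add0r !inE eqxx !orbT.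
- have -> : (1 - 'i) / 2 * (-1 + 'i * 1) = 'i - (1 + 'i ^+ 2) / 2 :> algC by field.
  by rewrite sqrCi subrr mul0r subr0 !inE eqxx !orbT.
- have -> : (1 - 'i) / 2 * (-1 + 'i * -1) = - ((1 - 'i ^+ 2) / 2) :> algC by field.
  by rewrite sqrCi opprK (_ : (1 + 1) / 2 = 1 :> algC) ?inE ?eqxx ?orbT //; field.
Qed.

Lemma odd_of_m0 m x : odd m -> (x < 4 * m)%N -> (x %% m = 0)%N -> x != 0%N -> x != (2 * m)%N ->
  odd x.
Proof.
move=> om hx hw x0 x2.
have m0 : (0 < m)%N by case: m om hx hw x0 x2.
have ex : x = (x %/ m * m)%N by rewrite {1}(divn_eq x m) hw addn0.
have hq : (x %/ m < 4)%N by rewrite ltn_divLR.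
move: ex x0 x2 hq; move: (x %/ m)%N => q ->.
case: q => [|[|[|[|q]]]] //= x0 x2 _; rewrite ?oddM ?om //; by rewrite ?mul0n ?eqxx in x0 x2.
Qed.

Theorem corollary1 (m : nat) (varphi : nat -> algC) :
  odd m -> (1 < m)%N ->
  (forall x, (x < 2 * m)%N -> varphi x = 1 \/ varphi x = -1) ->
  (OQS m (fseq m varphi) <-> GOBS m varphi).
Proof.
move=> om m1 hv.
have m0 : (0 < m)%N by apply: ltnW.
have [hX0 hY0] := XY0 m0 hv.
have bnd : forall X Y : int, X * X + Y * Y = 1 ->
    (X = 0 \/ X = 1 \/ X = -1) /\ (Y = 0 \/ Y = 1 \/ Y = -1).
  move=> X Y h.
  have bX : X = 0 \/ X = 1 \/ X = -1 by nia.
  have bY : Y = 0 \/ Y = 1 \/ Y = -1 by nia.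
  by split.
split.
- case=> _ hR.
  have hXY : forall w, (0 < w < m)%N ->
      Xs m varphi w * Xs m varphi w + Ys m varphi w * Ys m varphi w = 1.
    move=> w hw; apply/norm_int; rewrite -(Rf_eq w m0 hv); exact: hR.
  split.
  + move=> x hx x0 x2; rewrite (Rexp x om hv); apply/mem4.
    have : (x %% 4 < 4)%N by rewrite ltn_mod.
    case: (posnP (x %% m)) => [w0 | wpos].
    * have ox : odd (x %% 4) by rewrite odd_mod // (odd_of_m0 om hx w0 x0 x2).
      rewrite w0; move: ox; move: (x %% 4)%N => s.
      by case: s => [|[|[|[|s]]]] //= _ _; rewrite hY0; auto.
    * have := bnd _ _ (hXY (x %% m)%N _); rewrite wpos ltn_mod m0 => /(_ isT) [bX bY].
      move: (x %% 4)%N => s.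
      case: s => [|[|[|[|s]]]] //= _; lia.
  + rewrite -sum1dep_card big_mkcond /=.
    rewrite (big_crt _ (fun b => if Rcorr (4 * m) (expansion m varphi) b == 0 then 1%N else 0%N) om).
    rewrite (eq_bigr (fun u : 'I_4 => \sum_(k < m) (if Zs m varphi u k == 0 then 1 else 0))%N); last first.
      move=> u _; apply: eq_bigr => k _.
      have [_ e4 em] := crt_props om (ltn_ord u) (ltn_ord k).
      by rewrite (Rexp _ om hv) e4 em mul4_eq0.
    rewrite exchange_big /=.
    rewrite (eq_bigr (fun k : 'I_m => 2%N)); last first.
      move=> k _; rewrite !big_ord_recl big_ord0 /=.
      case: (posnP k) => [k0|kpos].
      - rewrite k0 hX0 hY0 /=.
        have -> : (m%:Z == 0) = false by apply/eqP; lia.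
        have -> : (- m%:Z == 0) = false by apply/eqP; lia.
        by [].
      - have hk := hXY k; rewrite kpos ltn_ord in hk; have := bnd _ _ (hk isT) => [[bX bY]].
        move: hk; case: bX => [->|[->|->]]; case: bY => [->|[->|->]] => /(_ isT) h; try (exfalso; lia); by [].
    elim: (m) => [|n IH]; first by rewrite big_ord0.
    by rewrite big_ord_recr /= IH; lia.
- case=> hG _; split.
  + move=> k hk; rewrite /fseq; apply: quat; exact: arr_pm.
  + move=> w /andP [w0 wm]; rewrite (Rf_eq w m0 hv); apply/norm_int.
    have gZ : forall u, (u < 4)%N -> Zs m varphi u w = 0 \/ Zs m varphi u w = 1 \/ Zs m varphi u w = -1.
      move=> u hu; have [lt e4 em] := crt_props om hu wm.
      apply/mem4; rewrite (_ : Zs m varphi u w = Zs m varphi (crt m u w %% 4) (crt m u w %% m)); last by rewrite e4 em.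
      rewrite -(Rexp _ om hv); apply: hG => //.
      - apply/negP => /eqP c0; move: em; rewrite c0 mod0n => h.
        by move: w0; rewrite -h.
      - apply/negP => /eqP c0; move: em; rewrite c0 modnMl => h.
        by move: w0; rewrite -h.
    have := gZ 0%N isT; have := gZ 1%N isT; rewrite /= => bY bX.
    case: (par w m0 hv) => c hc.
    have := odd_double_half m; rewrite om /= -muln2 => hm.
    case: bX hc => [->|[->|->]]; case: bY => [->|[->|->]] hc //; lia.
Qed.
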